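(* Let $n\in\mathbf{N}$ and $A\subset[n]$ have property P. For each $a\in A\cap[1,\frac{2n}{3}]$ let $j_a\geqslant0$ be the unique integer with $2^{j_a}a\in\left(\frac n3,\frac{2n}{3}\right]$, and let $B_1=\{2^{j_a}a:a\in A\cap[1,\frac{2n}{3}]\}$. Let $A'''=\{m\in\mathbf{N}:3m\in A_{(\frac12,1]}+A_{(\frac12,1]}\}$. Then $|B_1|=\left|A\cap[1,\frac{2n}{3}]\right|$, $B_1$ and $A'''$ are disjoint subsets of $\left(\frac n3,\frac{2n}{3}\right]$, and consequently $|B_1|+|A'''|\leqslant\left\lceil\frac n3\right\rceil$.
   Context: A set $A\subset\mathbf{N}$ has property P if there are no $x,y,z\in A$ (not necessarily distinct $x,y$) with $z<x$, $z<y$ and $z\mid x+y$. $A_{(\alpha,\beta]}=A\cap(\alpha n,\beta n]$, where intervals denote sets of integers. *)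

(* Defs.v *)
From mathcomp Require Import all_boot.
From mathcomp Require Import finmap.
Set Implicit Arguments. Unset Strict Implicit. Unset Printing Implicit Defensive.
Local Open Scope fset_scope.

Definition propP (A : {fset nat}) : Prop :=
  forall x y z, x \in A -> y \in A -> z \in A -> (z < x)%N -> (z < y)%N -> ~~ (z %| (x + y))%N.

Definition subset_n (n : nat) (A : {fset nat}) : Prop :=
  forall a, a \in A -> (1 <= a <= n)%N.

Definition A_low (n : nat) (A : {fset nat}) : {fset nat} :=
  [fset a in A | ((1 <= a) && (3 * a <= 2 * n))%N].

Definition A_half (n : nat) (A : {fset nat}) : {fset nat} :=
  [fset a in A | ((n < 2 * a) && (a <= n))%N].

Definition half_sumset (n : nat) (A : {fset nat}) : {fset nat} :=
  [fset (x + y)%N | x in A_half n A, y in A_half n A].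

Definition A3 (n : nat) (A : {fset nat}) : {fset nat} :=
  [fset (s %/ 3)%N | s in half_sumset n A & (3 %| s)%N].

Lemma A3_mem n A m : (m \in A3 n A) = ((3 * m)%N \in half_sumset n A).
Proof.
apply/imfsetP/idP => [[s /= /andP [Hs H3] ->]|H].
  by rewrite mulnC divnK.
exists (3 * m)%N; first by rewrite !inE H dvdn_mulr.
by rewrite mulKn.
Qed.

Definition B1 (n : nat) (A : {fset nat}) (j : nat -> nat) : {fset nat} :=
  [fset (2 ^ j a * a)%N | a in A_low n A].

Definition mid_third (n m : nat) : bool := ((n < 3 * m) && (3 * m <= 2 * n))%N.

(* Main.v *)
Require Import Defs.
From mathcomp Require Import all_boot.
From mathcomp Require Import finmap zify.
Local Open Scope fset_scope.

Lemma A3_inv n A m : m \in A3 n A -> exists x y, [/\ x \in A, y \in A,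
   ((n < 2 * x) && (x <= n))%N, ((n < 2 * y) && (y <= n))%N & (3 * m = x + y)%N].
Proof.
rewrite A3_mem => /imfset2P [x /= Hx [y /= Hy E]].
move: Hx Hy; rewrite !inE /= => /andP [Hx H1] /andP [Hy H3].
by exists x, y.
Qed.

Lemma B1_inv n A j b : b \in B1 n A j -> exists2 a, a \in A_low n A & b = (2 ^ j a * a)%N.
Proof. by move=> /imfsetP [a /= Ha ->]; exists a. Qed.

Lemma A_low_inv n A a : a \in A_low n A -> [/\ a \in A, (1 <= a)%N & (3 * a <= 2 * n)%N].
Proof. by rewrite !inE /= => /andP [H /andP [H1 H2]]. Qed.

Lemma card_mid n (S : {fset nat}) : (forall m, m \in S -> mid_third n m) ->
  (#|` S| <= (n + 2) %/ 3)%N.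
Proof.
move=> HS.
set s := iota (n %/ 3).+1 ((2 * n) %/ 3 - n %/ 3).
have sub : S `<=` [fset x in s].
  apply/fsubsetP => m /HS /andP [H1 H2]; rewrite inE /= mem_iota.
  apply/andP; split; lia.
apply: leq_trans (fsubset_leq_card sub) _.
rewrite card_fseq (leq_trans (size_undup _)) // size_iota; lia.
Qed.

Theorem mainTheorem11 (n : nat) (A : {fset nat}) (j : nat -> nat) :
  subset_n n A -> propP A ->
  (* j a = j_a : the (unique) integer j >= 0 with 2^j a in (n/3, 2n/3] *)
  (forall a, a \in A_low n A -> mid_third n (2 ^ j a * a)%N) ->
  [/\ (#|` B1 n A j| = #|` A_low n A|)%fset,
      (forall b, b \in B1 n A j -> mid_third n b),
      (forall m, m \in A3 n A -> mid_third n m),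
      [disjoint B1 n A j & A3 n A]%fset
    & (#|` B1 n A j| + #|` A3 n A| <= (n + 2) %/ 3)%N].
Proof.
move=> Hsub HP Hj.
have HB : forall b, b \in B1 n A j -> mid_third n b.
  by move=> b /B1_inv [a Ha ->]; apply: Hj.
have HA3 : forall m, m \in A3 n A -> mid_third n m.
  move=> m /A3_inv [x [y [_ _ H1 H2 E]]]; rewrite /mid_third; lia.
have Hdis : [disjoint B1 n A j & A3 n A]%fset.
  apply/fdisjointP => b Hb; apply/negP => Hb3.
  have Hmb := HB b Hb.
  case/B1_inv: Hb => a Ha Eb.
  case/A_low_inv: Ha => aA a1 a2.
  case/A3_inv: Hb3 => x [y [xA yA Hx Hy E]].
  have ab : (a <= b)%N by rewrite Eb leq_pmull // expn_gt0.
  move: Hmb; rewrite /mid_third => Hmb.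
  have ax : (a < x)%N by lia.
  have ay : (a < y)%N by lia.
  have := HP x y a xA yA aA ax ay.
  by rewrite -E Eb dvdn_mull // dvdn_mull.
split => //.
- rewrite card_in_imfset //.
  move=> a b Ha Hb /= E.
  case/A_low_inv: Ha => aA a1 _.
  case/A_low_inv: Hb => bA b1 _.
  wlog le : a b aA bA a1 b1 E / (j a <= j b)%N.
    move=> W; case: (leqP (j a) (j b)) => h; first exact: W.
    by apply/esym/W => //; apply: ltnW.
  have E' : a = (2 ^ (j b - j a) * b)%N.
    have Ej : j b = (j a + (j b - j a))%N by rewrite subnKC.
    move: E; rewrite [in X in _ = X]Ej expnD -mulnA => /eqP.
    by rewrite eqn_pmul2l ?expn_gt0 // => /eqP.
  case: (posnP (j b - j a)) => h.
    by move: E'; rewrite h expn0 mul1n.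
  exfalso.
  have ba : (b < a)%N.
    rewrite E' -[X in (X < _)%N]mul1n ltn_pmul2r //.
    by rewrite -(expn0 2) ltn_exp2l.
  have := HP a a b aA aA bA ba ba.
  by rewrite E' dvdn_add // dvdn_mull.
- rewrite -cardfsUI.
  move: Hdis; rewrite -fsetI_eq0 => /eqP ->.
  rewrite cardfs0 addn0; apply: card_mid => m; rewrite inE => /orP [] ?.
  + exact: HB.
  + exact: HA3.
Qed.
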